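(* Let $w$ be a metric on a finite set $V$ with $|V|\ge 3$, $T$ a minimum spanning tree of $G_w$, and $T'$ any subtree of $T$. Then $\mathsf{TSP}(w)\ge 2\cdot w(T')-2\cdot\mathsf{adv}^*(T')$.
   Context: $G_w$ is the complete graph on $V$ with edge weights $w$; $w(E')=\sum_{e\in E'}w(e)$ and $w(T')=w(E(T'))$. $\mathsf{TSP}(w)$ is the minimum weight of a Hamiltonian cycle in $G_w$. For a pair $e=(u,v)$, $P^T_e$ is the $u$–$v$ path in $T$; $f\in E(T)$ is covered by $e$ iff $f\in E(P^T_e)$; $\mathsf{cov}(E')$ is the set of edges of $T$ covered by some pair of $E'$; for a subtree $T'$, $\mathsf{cov}(E',T')=\mathsf{cov}(E')\cap E(T')$ and $\mathsf{adv}(E',T')=w(\mathsf{cov}(E',T'))-w(E')$. A vertex $x$ is special in $T'$ iff $\deg_{T'}(x)\ne 2$. $\mathsf{adv}^*(T')$ is the maximum of $\mathsf{adv}(E',T')$ over all sets $E'$ of pairs each having at least one endpoint that is a special vertex of $T'$. *)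

(* Defs.v *)
From mathcomp Require Import all_boot all_order all_algebra all_fingroup.
Set Implicit Arguments. Unset Strict Implicit. Unset Printing Implicit Defensive.
Import Order.TTheory GRing.Theory Num.Theory.
Local Open Scope ring_scope.

Section Defs.
Variables (R : realFieldType) (V : finType).

Definition is_pair (e : {set V}) : bool := #|e| == 2%N.

Definition is_metric (w : V -> V -> R) : Prop :=
  [/\ forall u, w u u = 0,
      forall u v, u != v -> 0 < w u v,
      forall u v, w u v = w v u &
      forall u v x, w u v <= w u x + w x v].

(* weight of an edge {u,v}: w u v (independent of the orientation when w is symmetric) *)
Definition wE (w : V -> V -> R) (e : {set V}) : R :=
  if [pick uv : V * V | (uv.1 != uv.2) && (e == [set uv.1; uv.2])] is Some uv
  then w uv.1 uv.2 else 0.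

Definition wS (w : V -> V -> R) (E : {set {set V}}) : R := \sum_(e in E) wE w e.

Definition adj (F : {set {set V}}) : rel V := fun x y => [set x; y] \in F.

Definition connected_on (U : {set V}) (F : {set {set V}}) : Prop :=
  forall u v, u \in U -> v \in U ->
    exists p : seq V, [/\ path (adj F) u p, last u p = v & all (mem U) p].

Definition acyclic (F : {set {set V}}) : Prop :=
  forall p : seq V, uniq p -> (3 <= size p)%N -> ~~ path.cycle (adj F) p.

Definition is_tree (U : {set V}) (F : {set {set V}}) : Prop :=
  [/\ U != set0,
      forall e, e \in F -> is_pair e && (e \subset U),
      connected_on U F & acyclic F].

Definition spanning_tree (T : {set {set V}}) : Prop := is_tree setT T.

Definition min_spanning_tree (w : V -> V -> R) (T : {set {set V}}) : Prop :=
  spanning_tree T /\ forall T2, spanning_tree T2 -> wS w T <= wS w T2.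

Definition subtree (T : {set {set V}}) (U' : {set V}) (F' : {set {set V}}) : Prop :=
  F' \subset T /\ is_tree U' F'.

(* f lies on a (simple) u-v path of T; in a tree this path P^T_{uv} is unique *)
Definition on_path (T : {set {set V}}) (u v : V) (f : {set V}) : bool :=
  [exists k : 'I_#|V|, exists p : k.-tuple V,
     [&& path (adj T) u p, last u p == v, uniq (u :: p) &
         has (fun xy => [set xy.1; xy.2] == f) (zip (u :: p) p)]].

Definition covers (T : {set {set V}}) (e f : {set V}) : bool :=
  [exists u, exists v, (e == [set u; v]) && on_path T u v f].

Definition cov (T : {set {set V}}) (E F' : {set {set V}}) : {set {set V}} :=
  [set f in F' | [exists e in E, covers T e f]].

Definition adv (w : V -> V -> R) (T : {set {set V}}) (E F' : {set {set V}}) : R :=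
  wS w (cov T E F') - wS w E.

Definition deg (F : {set {set V}}) (x : V) : nat := #|[set e in F | x \in e]|.

Definition special (U' : {set V}) (F' : {set {set V}}) (x : V) : bool :=
  (x \in U') && (deg F' x != 2%N).

Definition admissible (U' : {set V}) (F' : {set {set V}}) (E : {set {set V}}) : bool :=
  [forall e in E, is_pair e && [exists x in e, special U' F' x]].

(* adv*(T') : maximum over admissible E'.  The empty set is admissible with
   adv = 0, so using 0 as the neutral element gives exactly the maximum. *)
Definition advstar (w : V -> V -> R) (T : {set {set V}}) (U' : {set V})
  (F' : {set {set V}}) : R :=
  \big[Num.max/0]_(E : {set {set V}} | admissible U' F' E) adv w T E F'.

Definition tour (w : V -> V -> R) (s : seq V) : R :=
  \sum_(xy <- zip s (rot 1 s)) w xy.1 xy.2.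

Definition TSP (w : V -> V -> R) : R :=
  \big[Num.min/tour w (enum V)]_(s : {perm V}) tour w [seq s x | x <- enum V].

End Defs.

(* Main.v *)
Require Import Defs.
From mathcomp Require Import all_boot all_order all_algebra all_fingroup.
From mathcomp Require Import ring lra zify.
Set Implicit Arguments. Unset Strict Implicit. Unset Printing Implicit Defensive.
Import Order.TTheory GRing.Theory Num.Theory.
Local Open Scope ring_scope.

Fixpoint pw (R : realFieldType) (V : Type) (w : V -> V -> R) (x : V) (s : seq V) : R :=
  if s is y :: s' then w x y + pw w y s' else 0.

Lemma pw_rcons (R : realFieldType) (V : Type) (w : V -> V -> R) x s y :
  pw w x (rcons s y) = pw w x s + w (last x s) y.
Proof. by elim: s x => [|a s IH] x /=; rewrite ?add0r ?addr0 // IH addrA. Qed.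

Lemma sum_zip_rcons (R : realFieldType) (V : Type) (w : V -> V -> R) t x y :
  \sum_(xy <- zip (x :: t) (rcons t y)) w xy.1 xy.2 = pw w x (rcons t y).
Proof.
elim: t x => [|a t IH] x /=; first by rewrite big_cons big_nil.
by rewrite big_cons IH.
Qed.

Lemma tour_cons (R : realFieldType) (V : finType) (w : V -> V -> R) x t :
  tour w (x :: t) = pw w x (rcons t x).
Proof. by rewrite /tour rot1_cons sum_zip_rcons. Qed.

Lemma tour_rot1 (R : realFieldType) (V : finType) (w : V -> V -> R) q :
  tour w (rot 1 q) = tour w q.
Proof.
case: q => [|x [|y t]] //.
rewrite rot1_cons /= tour_cons tour_cons /= pw_rcons last_rcons.
by rewrite addrC.
Qed.

Lemma tour_rot (R : realFieldType) (V : finType) (w : V -> V -> R) k q :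
  (k < size q)%N -> tour w (rot k q) = tour w q.
Proof.
elim: k => [|k IH] hk; first by rewrite rot0.
by rewrite rotS ?tour_rot1 ?IH // ltnW.
Qed.

Lemma pw_filter (R : realFieldType) (V : Type) (w : V -> V -> R) (P : pred V) :
  (forall u v x, w u v <= w u x + w x v) ->
  forall s x, P (last x s) -> pw w x (filter P s) <= pw w x s.
Proof.
move=> tri; elim=> [|a s IH] x //= hl.
case: ifP => Pa /=.
  by rewrite lerD2l IH.
case: s IH hl => [|b s] IH /= hl; first by rewrite hl in Pa.
apply: le_trans (IH x hl) _ => /=.
by rewrite addrA lerD2r tri.
Qed.

Fixpoint pairs2 (T : Type) (s : seq T) : seq (T * T) :=
  match s with a :: b :: s' => (a, b) :: pairs2 s' | _ => [::] end.
Lemma pairs2_cons2 (T : Type) (a b : T) s : pairs2 [:: a, b & s] = (a, b) :: pairs2 s.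
Proof. by []. Qed.

Lemma wE_set2 (R : realFieldType) (V : finType) (w : V -> V -> R) a b :
  is_metric w -> wE w [set a; b] = w a b.
Proof.
case=> h0 _ hsym _; rewrite /wE.
case: pickP => [[x y] /= /andP [hxy /eqP he] | hn].
- have hx : x \in [set a; b] by rewrite he set21.
  have hy : y \in [set a; b] by rewrite he set22.
  move: hx hy hxy; rewrite !inE => /orP [] /eqP -> /orP [] /eqP ->; rewrite ?eqxx //.
- case: (eqVneq a b) => [<-|hab]; first by rewrite h0.
  by have := hn (a, b); rewrite /= hab eqxx.
Qed.

Lemma mem_pairs2 (T : eqType) (t : seq T) ab : ab \in pairs2 t -> (ab.1 \in t) && (ab.2 \in t).
Proof.
move: {2}(size t) (leqnn (size t)) => n; elim: n t => [|n IH] [|a [|b t]] // hn.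
rewrite pairs2_cons2 inE => /orP [/eqP -> | h]; first by rewrite /= !inE !eqxx orbT.
have hn' : (size t <= n)%N by move: hn; rewrite /= !ltnS => /ltnW.
have /andP [h1 h2] := IH t hn' h.
by rewrite !inE h1 h2 !orbT.
Qed.

Arguments mem_pairs2 {T t ab}.

Lemma pairs2_neq (T : eqType) (t : seq T) ab : uniq t -> ab \in pairs2 t -> ab.1 != ab.2.
Proof.
move: {2}(size t) (leqnn (size t)) => n; elim: n t => [|n IH] [|a [|b t]] // hn.
rewrite pairs2_cons2 inE => hu /orP [/eqP -> | h].
- by move: hu; rewrite /= inE negb_or => /andP [/andP [] ].
- apply: (IH t) => //; first by move: hn; rewrite /= !ltnS => /ltnW.
  by move: hu; rewrite /= => /and3P [].
Qed.

Lemma uniq_pairs2 (T : eqType) (t : seq T) : uniq t -> uniq (pairs2 t).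
Proof.
move: {2}(size t) (leqnn (size t)) => n; elim: n t => [|n IH] [|a [|b t]] // hn.
rewrite pairs2_cons2 => hu /=.
have ht : uniq t by move: hu; rewrite /= => /and3P [].
rewrite IH //; last by move: hn; rewrite /= !ltnS => /ltnW.
rewrite andbT; apply/negP => hin; have /andP [h _] := mem_pairs2 hin.
by move: hu; rewrite /= inE h !orbT.
Qed.

Lemma sum_imset_le (R : realFieldType) (I J : finType) (h : I -> J) (g : J -> R) (s : seq I) :
  (forall j, 0 <= g j) -> uniq s ->
  \sum_(j in [set h x | x in s]) g j <= \sum_(x <- s) g (h x).
Proof.
move=> hg hs; rewrite big_uniq // (partition_big_imset h) /=.
apply: ler_sum => j /imsetP [x hx ->].
rewrite (bigD1 x) ?hx ?eqxx //= lerDl.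
by apply: sumr_ge0 => i _; exact: hg.
Qed.

Lemma bigmax_ge (R : realFieldType) (I : eqType) (r : seq I) (P : pred I) (F : I -> R) i :
  i \in r -> P i -> F i <= \big[Num.max/0]_(j <- r | P j) F j.
Proof.
elim: r => [|a r IH] //; rewrite inE big_cons => /orP [/eqP <- | hi] hP.
- by rewrite hP le_max lexx.
- case: (P a); last exact: IH.
  by rewrite le_max IH ?orbT.
Qed.

Lemma bigmax_ge0 (R : realFieldType) (I : eqType) (r : seq I) (P : pred I) (F : I -> R) :
  0 <= \big[Num.max/0]_(j <- r | P j) F j.
Proof.
elim: r => [|a r IH]; first by rewrite big_nil.
rewrite big_cons; case: (P a) => //.
by rewrite le_max IH orbT.
Qed.

Lemma pairs2_sum (R : realFieldType) (V : Type) (w : V -> V -> R) s x y :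
  odd (size s) ->
  \sum_(ab <- pairs2 (x :: s)) w ab.1 ab.2 + \sum_(ab <- pairs2 (rcons s y)) w ab.1 ab.2
  = pw w x (rcons s y).
Proof.
move: {2}(size s) (leqnn (size s)) => n; elim: n s x => [|n IH] [|a [|b s]] x // hn hodd.
- by rewrite /= !big_cons !big_nil /= !addr0.
- rewrite !rcons_cons !pairs2_cons2 !big_cons.
  have -> : pw w x [:: a, b & rcons s y] = w x a + (w a b + pw w b (rcons s y)) by [].
  rewrite -(IH s b); first last.
  - by move: hodd; rewrite /= negbK.
  - by move: hn; rewrite /= !ltnS => /ltnW.
  by simpl; ring.
Qed.

Lemma pairs2_split (T : Type) (A : pred T) s :
  ~~ odd (size s) -> odd (count A s) -> has (fun ab => A ab.1 != A ab.2) (pairs2 s).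
Proof.
move: {2}(size s) (leqnn (size s)) => n; elim: n s => [|n IH] [|a [|b s]] // hn hev hc.
rewrite pairs2_cons2 /= -/(pairs2 s).
have hs : (size s <= n)%N by move: hn; rewrite /= !ltnS => /ltnW.
have he : ~~ odd (size s) by move: hev; rewrite /= negbK.
move: hc; rewrite /=.
case Ha: (A a); case Hb: (A b) => //= hc; apply: IH => //.
- by move: hc; rewrite negbK.
Qed.

Local Close Scope ring_scope.
Definition rF (V : finType) (F : {set {set V}}) (f : {set V}) : rel V :=
  fun x y => [set x; y] \in F :\ f.
Definition comp (V : finType) (F : {set {set V}}) f u : {set V} :=
  [set x | connect (rF F f) u x].

Lemma comp_closed (V : finType) (F : {set {set V}}) f u x y :
  x \in comp F f u -> [set x; y] \in F -> [set x; y] != f -> y \in comp F f u.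
Proof.
rewrite !inE => hx hF hne; apply: connect_trans hx _; apply: connect1.
by rewrite /rF !inE hne hF.
Qed.

Lemma comp_u (V : finType) (F : {set {set V}}) f u : u \in comp F f u.
Proof. by rewrite inE connect0. Qed.

Lemma v_notin (V : finType) (F : {set {set V}}) f u v :
  acyclic F -> f \in F -> f = [set u; v] -> u != v -> v \notin comp F f u.
Proof.
move=> hac hf hfe huv; apply/negP; rewrite inE => /connectP [p hp].
case: (shortenP hp) => p' hp' hu _ hl.
case: p' hp' hu hl => [|y [|z p'']] hp' hu hl.
- move: hl => /= hl; by move: huv; rewrite hl eqxx.
- move: hl => /= hl; subst y; move: hp'; rewrite /= /rF andbT !inE -hfe eqxx.
  done.
- have := hac (u :: [:: y, z & p'']) hu isT.
  have -> // : path.cycle (adj F) (u :: [:: y, z & p'']).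
  change (path (adj F) u (rcons [:: y, z & p''] u)); rewrite rcons_path; apply/andP; split.
  + apply: sub_path hp' => a b; rewrite /rF /adj !inE => /andP [].
    done.
  + by rewrite -hl /adj setUC -hfe.
Qed.

Lemma path_cross (V : eqType) (r : rel V) (A : pred V) p a :
  path r a p -> A a -> ~~ A (last a p) ->
  exists2 xy, xy \in zip (a :: p) p & [&& r xy.1 xy.2, A xy.1 & ~~ A xy.2].
Proof.
elim: p a => [|b p IH] a /=; first by move=> _ ->.
move=> /andP [hab hp] ha hl.
case hb: (A b).
- have [xy hxy hP] := IH b hp hb hl.
  by exists xy => //; rewrite inE hxy orbT.
- by exists (a, b); rewrite ?inE ?eqxx //= hab ha hb.
Qed.

Lemma cross_on_path (V : finType) (T F : {set {set V}}) (U : {set V}) f u a b :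
  F \subset T -> connected_on U F -> a \in U -> b \in U ->
  a \in comp F f u -> b \notin comp F f u -> on_path T a b f.
Proof.
move=> sFT hc aU bU aA bA.
have [p [hp hl _]] := hc a b aU bU.
move: hl; case: (shortenP hp) => p' hp' hu _ hl.
have hb' : ~~ ((fun x => x \in comp F f u) (last a p')) by rewrite hl.
have [xy hxy /and3P [hr hA hnA]] := path_cross (A := fun x => x \in comp F f u) hp' aA hb'.
have hxyf : [set xy.1; xy.2] == f.
  apply/negPn/negP => hne.
  by move: hnA; rewrite (comp_closed hA hr hne).
have hs : (size p' < #|V|)%N.
  have := max_card (mem (a :: p')).
  by rewrite (card_uniqP hu).
apply/existsP; exists (Ordinal hs); apply/existsP; exists (in_tuple p').
apply/and4P; split => //=.
- apply: sub_path hp' => x y; rewrite /adj => h; exact: (subsetP sFT _ h).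
- by rewrite hl.
- by apply/hasP; exists xy.
Qed.

Lemma deg_sum (V : finType) (F : {set {set V}}) x :
  deg F x = (\sum_(e in F) (x \in e : nat))%N.
Proof.
rewrite /deg -sum1_card big_mkcond [RHS]big_mkcond /=.
by apply: eq_bigr => e _; rewrite inE; case: (e \in F); case: (x \in e).
Qed.

Lemma sum_set2 (V : finType) (A : {set V}) a b : a != b ->
  (\sum_(x in A) (x \in [set a; b] : nat) = (a \in A) + (b \in A))%N.
Proof.
move=> hab.
rewrite big_mkcond /= (bigD1 a) //= (bigD1 b) /=; last by rewrite eq_sym.
rewrite [X in _ + (_ + X)]big1 ?addn0.
  by rewrite !inE !eqxx orbT /=; case: (a \in A); case: (b \in A).
move=> x /andP [hxb hxa]; rewrite !inE (negbTE hxa) (negbTE hxb).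
by case: (x \in A).
Qed.

Lemma odd_comp (V : finType) (F : {set {set V}}) f u v :
  (forall e, e \in F -> is_pair e) -> acyclic F -> f \in F -> f = [set u; v] -> u != v ->
  odd (\sum_(x in comp F f u) deg F x).
Proof.
move=> hpair hac hf hfe huv.
rewrite (eq_bigr _ (fun x _ => deg_sum F x)) exchange_big /= (bigD1 f hf) /= oddD.
have h1 := sum_set2 (comp F f u) huv; rewrite -hfe in h1; rewrite h1.
rewrite comp_u (negbTE (v_notin hac hf hfe huv)) /=.
apply: (big_ind (fun n => ~~ odd n)) => //.
  by move=> x y hx hy; rewrite oddD (negbTE hx) (negbTE hy).
move=> e /andP [heF hef].
have /cards2P [a [b [hab he]]] := hpair e heF.
rewrite he sum_set2 //.
have -> : (b \in comp F f u) = (a \in comp F f u).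
  apply/idP/idP => h.
  - by apply: (comp_closed h); rewrite setUC -he.
  - by apply: (comp_closed h); rewrite -he.
by rewrite addnn odd_double.
Qed.

Lemma even_all (V : finType) (F : {set {set V}}) :
  (forall e, e \in F -> is_pair e) -> ~~ odd (\sum_x deg F x).
Proof.
move=> hpair.
rewrite (eq_bigr _ (fun x _ => deg_sum F x)) exchange_big /=.
apply: (big_ind (fun n => ~~ odd n)) => //.
  by move=> x y hx hy; rewrite oddD (negbTE hx) (negbTE hy).
move=> e heF.
have /cards2P [a [b [hab he]]] := hpair e heF.
have := sum_set2 setT hab; rewrite big_mkcond /= -he.
under eq_bigr do rewrite inE.
by move=> ->; rewrite !inE addnn odd_double.
Qed.

Lemma odd_sum_odd (I : finType) (P : pred I) (g : I -> nat) :
  odd (\sum_(i | P i) (odd (g i) : nat)) = odd (\sum_(i | P i) g i).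
Proof.
apply: (big_ind2 (fun a b => odd a = odd b)) => //.
  by move=> ? ? ? ? h1 h2; rewrite !oddD h1 h2.
by move=> i _; case h: (odd (g i)).
Qed.

Lemma count_odd (V : finType) (F : {set {set V}}) (t : seq V) (A : {set V}) :
  uniq t -> t =i [set x | odd (deg F x)] ->
  count (mem A) t = (\sum_(x in A) (odd (deg F x) : nat))%N.
Proof.
move=> ht hm.
rewrite -sum1_count big_mkcond /= big_uniq //= big_mkcond [RHS]big_mkcond /=.
apply: eq_bigr => x _; rewrite hm inE.
by case: (odd (deg F x)); case: (x \in A).
Qed.

Local Open Scope ring_scope.

Definition Odd (V : finType) (F : {set {set V}}) : {set V} := [set x | odd (deg F x)].

Lemma Odd_sub (V : finType) (F : {set {set V}}) (U : {set V}) x :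
  (forall e, e \in F -> is_pair e && (e \subset U)) -> x \in Odd F -> x \in U.
Proof.
move=> hF; rewrite inE /deg => hx.
have : (0 < #|[set e in F | x \in e]|)%N by case: #|_| hx.
rewrite card_gt0 => /set0Pn [e]; rewrite inE => /andP [heF hxe].
by have /andP [_ /subsetP] := hF e heF; apply.
Qed.

Lemma tour_ge0 (R : realFieldType) (V : finType) (w : V -> V -> R) q :
  is_metric w -> 0 <= tour w q.
Proof.
case=> h0 hpos _ _; apply: sumr_ge0 => [[x y]] _ /=.
by case: (eqVneq x y) => [->|hxy]; rewrite ?h0 // ltW // hpos.
Qed.

Lemma shortcut (R : realFieldType) (V : finType) (w : V -> V -> R) (O : {set V}) q :
  is_metric w -> uniq q -> (forall x, x \in q) ->
  exists t, [/\ uniq t, t =i O & tour w t <= tour w q].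
Proof.
move=> hm hq hall.
case: (eqVneq O set0) => [-> | /set0Pn [o ho]].
  exists [::]; split => //; last by rewrite /tour big_nil; apply: tour_ge0.
  by move=> x; rewrite inE.
have hoq := hall o.
have hk : (index o q < size q)%N by rewrite index_mem.
move: (rot_index hoq) => hr.
set r := (drop _ q ++ take _ q) in hr.
exists (o :: filter (mem O) r); split.
- have : uniq (filter (mem O) (rot (index o q) q)) by rewrite filter_uniq ?rot_uniq.
  by rewrite hr /= ho.
- move=> x; rewrite inE mem_filter.
  case: (eqVneq x o) => [-> | hxo] /=; first by rewrite ho.
  have : x \in rot (index o q) q by rewrite mem_rot.
  by rewrite hr inE (negbTE hxo) /= => ->; rewrite andbT.
- rewrite -(tour_rot w hk) hr !tour_cons.
  have -> : rcons (filter (mem O) r) o = filter (mem O) (rcons r o).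
    by rewrite filter_rcons /= ho.
  case: hm => _ _ _ htri.
  by apply: pw_filter => //; rewrite last_rcons.
Qed.

Lemma even_size (V : finType) (F : {set {set V}}) t :
  (forall e, e \in F -> is_pair e) -> uniq t -> t =i Odd F -> ~~ odd (size t).
Proof.
move=> hpair hu ht.
have := count_odd setT hu ht.
rewrite (eq_count (a2 := predT)) ?count_predT; last by move=> x; rewrite /= in_setT.
move=> ->; rewrite odd_sum_odd.
have := even_all hpair.
by rewrite (eq_bigl (fun x => x \in setT)) // => x; rewrite in_setT.
Qed.

Lemma cover_lemma (V : finType) (T F : {set {set V}}) (U : {set V}) t f :
  F \subset T -> (forall e, e \in F -> is_pair e && (e \subset U)) -> connected_on U F ->
  acyclic F -> uniq t -> t =i Odd F -> f \in F ->
  exists2 ab, ab \in pairs2 t & covers T [set ab.1; ab.2] f.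
Proof.
move=> sFT hF hc hac hu ht hf.
have hpair : forall e, e \in F -> is_pair e by move=> e /hF /andP [].
have /cards2P [u [v [huv hfe]]] := hpair f hf.
set A := comp F f u.
have hev := even_size hpair hu ht.
have hodd : odd (count (mem A) t).
  by rewrite (count_odd A hu ht) odd_sum_odd (odd_comp hpair hac hf hfe huv).
have /hasP [ab hab hne] := pairs2_split hev hodd.
have /andP [h1 h2] := mem_pairs2 hab.
have hU1 : ab.1 \in U by apply: (Odd_sub hF); rewrite -ht.
have hU2 : ab.2 \in U by apply: (Odd_sub hF); rewrite -ht.
exists ab => //.
apply/existsP.
case h1A: (ab.1 \in A) in hne.
- exists ab.1; apply/existsP; exists ab.2; rewrite eqxx /=.
  apply: (cross_on_path (u := u) sFT hc hU1 hU2 h1A).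
  by move: hne; rewrite /= h1A; case: (ab.2 \in A).
- exists ab.2; apply/existsP; exists ab.1; rewrite setUC eqxx /=.
  apply: (cross_on_path (u := u) sFT hc hU2 hU1); last by rewrite h1A.
  by move: hne; rewrite /= h1A; case: (ab.2 \in A).
Qed.

Lemma wE_ge0 (R : realFieldType) (V : finType) (w : V -> V -> R) e :
  is_metric w -> 0 <= wE w e.
Proof.
case=> h0 hpos _ _; rewrite /wE; case: pickP => // [[x y]] /= /andP [hxy _].
by rewrite ltW // hpos.
Qed.

Lemma main_q (R : realFieldType) (V : finType) (w : V -> V -> R)
  (T : {set {set V}}) (U : {set V}) (F : {set {set V}}) q :
  is_metric w -> subtree T U F -> uniq q -> (forall x, x \in q) ->
  2 * wS w F - 2 * advstar w T U F <= tour w q.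
Proof.
move=> hm [sFT [_ hF hc hac]] hq hall.
have hpair : forall e, e \in F -> is_pair e by move=> e /hF /andP [].
have [t [hu ht hle]] := shortcut (Odd F) hm hq hall.
pose M := fun t' : seq V => [set [set ab.1; ab.2] | ab in pairs2 t'].
have key : forall t', uniq t' -> t' =i Odd F -> wS w F - wS w (M t') <= advstar w T U F.
  move=> t' hu' ht'.
  have hcov : cov T (M t') F = F.
    apply/setP => f; rewrite inE; apply/andb_idr => hf.
    have [ab hab hcv] := cover_lemma sFT hF hc hac hu' ht' hf.
    apply/existsP; exists [set ab.1; ab.2]; rewrite hcv andbT.
    by apply/imsetP; exists ab.
  have hadm : admissible U F (M t').
    apply/forallP => e; apply/implyP => /imsetP [ab hab ->].
    have /andP [h1 _] := mem_pairs2 hab.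
    rewrite /is_pair cards2 (pairs2_neq hu' hab) /=.
    apply/existsP; exists ab.1; rewrite set21 /special (Odd_sub hF) /=; last by rewrite -ht'.
    by move: h1; rewrite ht' inE; apply: contraL => /eqP ->.
  rewrite /advstar.
  apply: le_trans (bigmax_ge (i := M t') _ _ hadm); last by rewrite mem_index_enum.
  by rewrite /adv hcov.
have hev := even_size hpair hu ht.
have hsum : \sum_(ab <- pairs2 t) w ab.1 ab.2 + \sum_(ab <- pairs2 (rot 1 t)) w ab.1 ab.2
            = tour w t.
  case: t hu ht hle hev => [|x s] hu ht hle hev.
    by rewrite /tour !big_nil addr0.
  rewrite rot1_cons tour_cons pairs2_sum //.
  by move: hev; rewrite /= negbK.
have hM : forall t', uniq t' -> wS w (M t') <= \sum_(ab <- pairs2 t') w ab.1 ab.2.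
  move=> t' hu'; rewrite /wS.
  apply: le_trans (sum_imset_le (fun ab : V * V => [set ab.1; ab.2]) (g := wE w) _ (uniq_pairs2 hu')) _.
    by move=> e; apply: wE_ge0.
  by under eq_bigr do rewrite (wE_set2 _ _ hm).
have k1 := key t hu ht.
have hu1 : uniq (rot 1 t) by rewrite rot_uniq.
have ht1 : rot 1 t =i Odd F by move=> x; rewrite mem_rot ht.
have k2 := key (rot 1 t) hu1 ht1.
have m1 := hM t hu.
have m2 := hM (rot 1 t) hu1.
lra.
Qed.

Unset Implicit Arguments.

Theorem mainTheorem3 (R : realFieldType) (V : finType) (w : V -> V -> R)
  (T : {set {set V}}) (U' : {set V}) (F' : {set {set V}}) :
  (3 <= #|V|)%N -> is_metric w -> min_spanning_tree w T -> subtree T U' F' ->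
  2 * wS w F' - 2 * advstar w T U' F' <= TSP w.
Proof.
move=> _ hm _ hst; rewrite /TSP.
apply: (big_ind (fun y => _ <= y)).
- by apply: main_q => //; [exact: enum_uniq | move=> x; rewrite mem_enum].
- by move=> x y hx hy; rewrite le_min hx hy.
- move=> s _; apply: main_q => //.
    by rewrite map_inj_uniq ?enum_uniq //; exact: perm_inj.
  by move=> x; apply/mapP; exists ((s^-1)%g x); rewrite ?mem_enum ?permKV.
Qed.
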